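(* Let $X$ and $A$ be non-empty finite sets and let $\mathcal R$ be a resource over $(X,A)$. Then the family of norms $(\|\cdot\|^{(n)}_{\mathcal R})_{n\in\mathbb N}$, where $\|u\|^{(n)}_{\mathcal R}=\sup_{U\in\mathcal R}\|\phi_U^{(n)}(u)\|$ for $u\in M_n(\mathcal S_1^{A,X})$, is an operator space structure on the vector space $\mathcal S_1^{A,X}$.
   Context: $\mathcal S_1^{A,X}$ is the space of linear operators $\mathbb C^A\to\mathbb C^X$ with matrix units $\epsilon_{x,a}=e_xe_a^*$. A block operator isometry over $(X,A)$ is an isometry $U=(U_{a,x})_{a\in A,x\in X}:H^X\to K^A$ with entries $U_{a,x}\in\mathcal B(H,K)$ ($H,K$ Hilbert spaces, allowed to depend on $U$); $\phi_U:\mathcal S_1^{A,X}\to\mathcal B(H,K)$ is the linear map with $\phi_U(\epsilon_{x,a})=U_{a,x}$, and $\phi_U^{(n)}$ its entrywise $n$-th amplification. The direct sum of block operator isometries $U,U'$ is the block operator isometry with entries $U_{a,x}\oplus U'_{a,x}$. A resource over $(X,A)$ is a family $\mathcal R$ of block operator isometries over $(X,A)$ that is closed under finite direct sums and is separating: for every nonzero $S\in\mathcal S_1^{A,X}$ there is $U\in\mathcal R$ with $\phi_U(S)\neq0$. (An operator space structure is a family of norms on $M_n(\cdot)$ satisfying Ruan's axioms $\|v\oplus w\|=\max\{\|v\|,\|w\|\}$ and $\|\alpha v\beta\|\le\|\alpha\|\|v\|\|\beta\|$.) *)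

(* Defs.v *)
From HB Require Import structures.
From mathcomp Require Import all_boot all_order all_algebra.
From mathcomp Require Import all_classical all_reals ereal.
From mathcomp Require Import complex.

Set Implicit Arguments.
Unset Strict Implicit.
Unset Printing Implicit Defensive.

Import Order.TTheory GRing.Theory Num.Theory.
Local Open Scope ring_scope.
Local Open Scope classical_set_scope.

Section Defs.
Variable R : realType.
Local Notation C := (R[i]).

Definition sqn_of (V : Type) (ip : V -> V -> C) (x : V) : R := complex.Re (ip x x).

Definition ip_cauchy (V : zmodType) (ip : V -> V -> C) (u : nat -> V) :=
  forall e : R, 0 < e -> exists N : nat, forall m n : nat, (N <= m)%N -> (N <= n)%N ->
    Num.sqrt (sqn_of ip (u m - u n)) < e.

Definition ip_converges (V : zmodType) (ip : V -> V -> C) (u : nat -> V) (l : V) :=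
  forall e : R, 0 < e -> exists N : nat, forall n : nat, (N <= n)%N ->
    Num.sqrt (sqn_of ip (u n - l)) < e.

Record hilbert := Hilbert {
  hspace : lmodType C;
  hinner : hspace -> hspace -> C;
  hinnerDl : forall (c : C) (x y z : hspace),
      hinner (c *: x + y) z = c * hinner x z + hinner y z;
  hinnerC : forall x y : hspace, hinner x y = (hinner y x)^*;
  hinner_ge0 : forall x : hspace, 0 <= hinner x x;
  hinner_eq0 : forall x : hspace, hinner x x = 0 -> x = 0;
  hcomplete : forall u : nat -> hspace, ip_cauchy hinner u ->
      exists l : hspace, ip_converges hinner u l
}.

Definition sqn (H : hilbert) (x : hspace H) : R := sqn_of (@hinner H) x.

Section HSum.
Variables H H' : hilbert.

Definition hsum_inner (x y : (hspace H * hspace H')%type) : C :=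
  hinner x.1 y.1 + hinner x.2 y.2.

Lemma ReD (a b : C) : complex.Re (a + b) = complex.Re a + complex.Re b.
Proof. by case: a; case: b. Qed.

Lemma Re_ge0 (z : C) : 0 <= z -> 0 <= complex.Re z.
Proof. by rewrite lecE => /andP[]. Qed.

Lemma sqn_ge0 (K : hilbert) (x : hspace K) : 0 <= sqn x.
Proof. exact/Re_ge0/hinner_ge0. Qed.

Lemma hsum_innerDl (c : C) (x y z : (hspace H * hspace H')%type) :
  hsum_inner (c *: x + y) z = c * hsum_inner x z + hsum_inner y z.
Proof.
rewrite /hsum_inner /= !hinnerDl mulrDr -!addrA; congr (_ + _).
by rewrite addrCA.
Qed.

Lemma hsum_innerC (x y : (hspace H * hspace H')%type) :
  hsum_inner x y = (hsum_inner y x)^*.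
Proof. by rewrite /hsum_inner (hinnerC x.1) (hinnerC x.2) raddfD. Qed.

Lemma hsum_inner_ge0 x : 0 <= hsum_inner x x.
Proof. by rewrite /hsum_inner addr_ge0 // hinner_ge0. Qed.

Lemma hsum_inner_eq0 x : hsum_inner x x = 0 -> x = 0.
Proof.
case: x => x1 x2; rewrite /hsum_inner /= => /eqP.
rewrite paddr_eq0 ?hinner_ge0 // => /andP[/eqP/hinner_eq0 -> /eqP/hinner_eq0 ->].
by [].
Qed.

Lemma sqn_of_hsum x : sqn_of hsum_inner x = sqn x.1 + sqn x.2.
Proof. by rewrite /sqn_of /sqn /hsum_inner ReD. Qed.

Lemma sqrt_le_add (a b : R) : 0 <= a -> 0 <= b ->
  Num.sqrt (a + b) <= Num.sqrt a + Num.sqrt b.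
Proof.
move=> a0 b0.
have -> : Num.sqrt a + Num.sqrt b = Num.sqrt ((Num.sqrt a + Num.sqrt b) ^+ 2).
  by rewrite sqrtr_sqr ger0_norm // addr_ge0 // sqrtr_ge0.
apply: ler_wsqrtr; rewrite sqrrD !sqr_sqrtr // lerD2r -{1}[a]addr0 lerD2l.
by rewrite mulrn_wge0 // mulr_ge0 // sqrtr_ge0.
Qed.

Lemma sqrt_le_addl (a b : R) : 0 <= b -> Num.sqrt a <= Num.sqrt (a + b).
Proof. by move=> b0; apply: ler_wsqrtr; rewrite lerDl. Qed.

Lemma sqrt_le_addr (a b : R) : 0 <= a -> Num.sqrt b <= Num.sqrt (a + b).
Proof. by move=> a0; apply: ler_wsqrtr; rewrite lerDr. Qed.

Lemma hsum_complete (u : nat -> (hspace H * hspace H')%type) :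
  ip_cauchy hsum_inner u -> exists l, ip_converges hsum_inner u l.
Proof.
move=> cu.
have [l1 cv1] : exists l1, ip_converges (@hinner H) (fun n => (u n).1) l1.
  apply: hcomplete => e e0; have [N HN] := cu e e0; exists N => m n Nm Nn.
  apply: le_lt_trans (HN m n Nm Nn); rewrite sqn_of_hsum.
  exact/sqrt_le_addl/sqn_ge0.
have [l2 cv2] : exists l2, ip_converges (@hinner H') (fun n => (u n).2) l2.
  apply: hcomplete => e e0; have [N HN] := cu e e0; exists N => m n Nm Nn.
  apply: le_lt_trans (HN m n Nm Nn); rewrite sqn_of_hsum.
  exact/sqrt_le_addr/sqn_ge0.
exists (l1, l2) => e e0.
have e20 : 0 < e / 2 by rewrite divr_gt0.
have [N1 HN1] := cv1 _ e20; have [N2 HN2] := cv2 _ e20.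
exists (maxn N1 N2) => n; rewrite geq_max => /andP[n1 n2].
rewrite sqn_of_hsum; apply: le_lt_trans (sqrt_le_add (sqn_ge0 _) (sqn_ge0 _)) _.
rewrite [e]splitr; exact: ltrD (HN1 n n1) (HN2 n n2).
Qed.

Definition hsum : hilbert :=
  @Hilbert (hspace H * hspace H')%type hsum_inner hsum_innerDl hsum_innerC
    hsum_inner_ge0 hsum_inner_eq0 hsum_complete.

End HSum.

Lemma sqn_hsum (H H' : hilbert) (x : hspace (hsum H H')) :
  sqn x = sqn x.1 + sqn x.2.
Proof. exact: sqn_of_hsum. Qed.

Section BOI.
Variables X A : finType.

(* U = (U_{a,x}) : H^X -> K^A, entries linear maps H -> K, and U is an isometry
   for the Hilbert direct-sum norms on H^X and K^A. *)
Record boi := BOI {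
  bH : hilbert;
  bK : hilbert;
  bU : A -> X -> hspace bH -> hspace bK;
  bU_lin : forall a x (c : C) (h h' : hspace bH),
      bU a x (c *: h + h') = c *: bU a x h + bU a x h';
  bU_iso : forall xi : X -> hspace bH,
      \sum_(a : A) sqn (\sum_(x : X) bU a x (xi x)) = \sum_(x : X) sqn (xi x)
}.
Arguments bU [b] a x _.

Lemma fst_sum (V W : zmodType) (I : finType) (F : I -> (V * W)%type) :
  (\sum_i F i).1 = \sum_i (F i).1.
Proof. by apply: (big_morph fst) => //. Qed.

Lemma snd_sum (V W : zmodType) (I : finType) (F : I -> (V * W)%type) :
  (\sum_i F i).2 = \sum_i (F i).2.
Proof. by apply: (big_morph snd) => //. Qed.

Section BOISum.
Variables U V : boi.

Definition boi_sum_U (a : A) (x : X) (h : hspace (hsum (bH U) (bH V))) :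
    hspace (hsum (bK U) (bK V)) :=
  (bU (b:=U) a x h.1, bU (b:=V) a x h.2).

Lemma boi_sum_lin a x (c : C) (h h' : hspace (hsum (bH U) (bH V))) :
  boi_sum_U a x (c *: h + h') = c *: boi_sum_U a x h + boi_sum_U a x h'.
Proof. by rewrite /boi_sum_U /= !bU_lin. Qed.

Lemma boi_sum_iso (xi : X -> hspace (hsum (bH U) (bH V))) :
  \sum_(a : A) sqn (\sum_(x : X) boi_sum_U a x (xi x)) = \sum_(x : X) sqn (xi x).
Proof.
under eq_bigr do rewrite sqn_hsum fst_sum snd_sum /=.
rewrite big_split /= (bU_iso (b:=U) (fun x => (xi x).1)) (bU_iso (b:=V) (fun x => (xi x).2)).
by rewrite -big_split /=; apply: eq_bigr => x _; rewrite sqn_hsum.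
Qed.

Definition boi_sum : boi :=
  @BOI (hsum (bH U) (bH V)) (hsum (bK U) (bK V)) boi_sum_U boi_sum_lin boi_sum_iso.
End BOISum.

(* S_1^{A,X}: linear maps C^A -> C^X, stored by their matrix coefficients
   S (x, a) with respect to the matrix units eps_{x,a} = e_x e_a^*. *)
Definition S1 := {ffun X * A -> C}.

Definition phi (U : boi) (S : S1) : hspace (bH U) -> hspace (bK U) :=
  fun h => \sum_(x : X) \sum_(a : A) S (x, a) *: bU (b:=U) a x h.
Arguments phi : clear implicits.

(* resource: closed under (binary, hence finite) direct sums, and separating *)
Definition is_resource (Rs : boi -> Prop) : Prop :=
  (forall U V : boi, Rs U -> Rs V -> Rs (boi_sum U V)) /\
  (forall S : S1, S != 0 -> exists U : boi, Rs U /\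
      exists h : hspace (bH U), phi U S h != 0).

Definition ampl_norm (U : boi) (n : nat) (u : 'M[S1]_n) : \bar R :=
  ereal_sup [set (Num.sqrt (\sum_(i < n) sqn (\sum_(j < n) phi U (u i j) (xi j))))%:E
            | xi in [set xi : 'I_n -> hspace (bH U) | \sum_(j < n) sqn (xi j) <= 1]].

Definition res_norm (Rs : boi -> Prop) (n : nat) (u : 'M[S1]_n) : \bar R :=
  ereal_sup [set e : \bar R | exists2 U : boi, Rs U & e = ampl_norm U u].

End BOI.

Definition cabs2 (z : C) : R := complex.Re (z * z^*).
Definition cabs (z : C) : R := Num.sqrt (cabs2 z).

Definition cmx_norm (n m : nat) (alpha : 'M[C]_(n, m)) : \bar R :=
  ereal_sup [set (Num.sqrt (\sum_(i < n) cabs2 (\sum_(j < m) alpha i j * xi j)))%:E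
            | xi in [set xi : 'I_m -> C | \sum_(j < m) cabs2 (xi j) <= 1]].

Section OSS.
Variable V : lmodType C.

Definition mx_scale (n : nat) (c : C) (u : 'M[V]_n) : 'M[V]_n :=
  map_mx (fun v => c *: v) u.

Definition mx_mul3 (n m : nat) (alpha : 'M[C]_(n, m)) (v : 'M[V]_m)
    (beta : 'M[C]_(m, n)) : 'M[V]_n :=
  \matrix_(i < n, j < n) \sum_(k < m) \sum_(l < m) (alpha i k * beta l j) *: v k l.

Definition matrix_norms (N : forall n : nat, 'M[V]_n -> \bar R) : Prop :=
  [/\ (forall n (u : 'M[V]_n), (0 < n)%N -> N n u \is a fin_num),
      (forall n (u : 'M[V]_n), (0 < n)%N -> N n u = 0%E -> u = 0),
      (forall n (c : C) (u : 'M[V]_n), (0 < n)%N ->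
          N n (mx_scale c u) = ((cabs c)%:E * N n u)%E) &
      (forall n (u v : 'M[V]_n), (0 < n)%N -> (N n (u + v)%R <= N n u + N n v)%E)].

Definition ruan_axioms (N : forall n : nat, 'M[V]_n -> \bar R) : Prop :=
  (forall n m (v : 'M[V]_n) (w : 'M[V]_m), (0 < n)%N -> (0 < m)%N ->
      N (n + m)%N (block_mx v 0 0 w) = maxe (N n v) (N m w)) /\
  (forall n m (alpha : 'M[C]_(n, m)) (v : 'M[V]_m) (beta : 'M[C]_(m, n)),
      (0 < n)%N -> (0 < m)%N ->
      (N n (mx_mul3 alpha v beta) <= cmx_norm alpha * N m v * cmx_norm beta)%E).

Definition operator_space_structure (N : forall n : nat, 'M[V]_n -> \bar R) : Prop :=
  matrix_norms N /\ ruan_axioms N.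
End OSS.

End Defs.

(* Main.v *)
Require Import Defs.
From HB Require Import structures.
From mathcomp Require Import all_boot all_order all_algebra.
From mathcomp Require Import all_classical all_reals ereal.
From mathcomp Require Import complex.
From mathcomp Require Import ring lra.

Set Implicit Arguments.
Unset Strict Implicit.
Unset Printing Implicit Defensive.
Import Order.TTheory GRing.Theory Num.Theory.
Local Open Scope ring_scope.

Section Aux.
Variable R : realType.
Local Notation C := (R[i]).

Lemma ReM_cabs2 (c z : C) : complex.Im z = 0 ->
  complex.Re (c * Num.conj c * z) = cabs2 c * complex.Re z.
Proof. case: c => a b; case: z => p q /= ->; rewrite /cabs2 /=; ring. Qed.

Lemma cabs2_ge0 (c : C) : 0 <= cabs2 c.
Proof. case: c => a b; rewrite /cabs2 /=; nra. Qed.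

Lemma cabs2_eq0 (c : C) : cabs2 c = 0 -> c = 0.
Proof.
case: c => a b; rewrite /cabs2 /= => h.
have ha : a = 0 by nra. have hb : b = 0 by nra.
by rewrite ha hb.
Qed.

Lemma cabs2M (c d : C) : cabs2 (c * d) = cabs2 c * cabs2 d.
Proof. case: c => a b; case: d => p q; rewrite /cabs2 /=; ring. Qed.

Lemma cabs2R (t : R) : cabs2 (t%:C)%C = t ^+ 2.
Proof. rewrite /cabs2 /=; ring. Qed.

Lemma cabs_ge0 (c : C) : 0 <= cabs c.
Proof. exact: sqrtr_ge0. Qed.

Lemma cabsM (c d : C) : cabs (c * d) = cabs c * cabs d.
Proof. by rewrite /cabs cabs2M sqrtrM // cabs2_ge0. Qed.

Lemma cabs_sqr (c : C) : cabs c ^+ 2 = cabs2 c.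
Proof. by rewrite /cabs sqr_sqrtr // cabs2_ge0. Qed.

Lemma ReD' (a b : C) : complex.Re (a + b) = complex.Re a + complex.Re b.
Proof. by case: a; case: b. Qed.

Lemma Re_sum (I : Type) (r : seq I) (P : pred I) (F : I -> C) :
  complex.Re (\sum_(i <- r | P i) F i) = \sum_(i <- r | P i) complex.Re (F i).
Proof. by apply: (big_morph _ ReD'). Qed.

Lemma ReJ (a : C) : complex.Re (Num.conj a) = complex.Re a.
Proof. by case: a. Qed.

Lemma ReRM (t : R) (a : C) : complex.Re ((t%:C)%C * a) = t * complex.Re a.
Proof. case: a => p q /=; ring. Qed.

Lemma conjR (t : R) : Num.conj ((t%:C)%C : C) = (t%:C)%C.
Proof. by apply/eqP; rewrite eq_complex /= oppr0 !eqxx. Qed.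

End Aux.
Section IPS.
Variable R : realType.
Local Notation C := (R[i]).

Record ipsp (V : lmodType C) := IPS {
  ipf : V -> V -> C;
  ipDl : forall (c : C) (x y z : V), ipf (c *: x + y) z = c * ipf x z + ipf y z;
  ipC : forall x y : V, ipf x y = Num.conj (ipf y x);
  ip_ge0 : forall x : V, 0 <= ipf x x;
  ip_eq0 : forall x : V, ipf x x = 0 -> x = 0 }.

Variable V : lmodType C.
Variable P : ipsp V.
Local Notation ip := (ipf P).
Definition nrm2 (x : V) : R := complex.Re (ip x x).
Definition nrm (x : V) : R := Num.sqrt (nrm2 x).

Lemma ip0l y : ip 0 y = 0.
Proof.
have := ipDl P 1 0 0 y; rewrite scaler0 addr0 mul1r => /eqP.
by rewrite -{1}[ip 0 y]addr0 eq_sym => /eqP /addrI.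
Qed.

Lemma ipDl' x y z : ip (x + y) z = ip x z + ip y z.
Proof. by have := ipDl P 1 x y z; rewrite scale1r mul1r. Qed.

Lemma ipZl c x z : ip (c *: x) z = c * ip x z.
Proof. by have := ipDl P c x 0 z; rewrite addr0 ip0l addr0. Qed.

Lemma ipNl x z : ip (- x) z = - ip x z.
Proof. by rewrite -scaleN1r ipZl mulN1r. Qed.

Lemma ipBl x y z : ip (x - y) z = ip x z - ip y z.
Proof. by rewrite ipDl' ipNl. Qed.

Lemma ip_suml (I : Type) (r : seq I) (Q : pred I) (F : I -> V) z :
  ip (\sum_(i <- r | Q i) F i) z = \sum_(i <- r | Q i) ip (F i) z.
Proof. by apply: (big_morph (fun x => ip x z)) => [x y|]; rewrite ?ipDl' ?ip0l. Qed.

Lemma ip0r y : ip y 0 = 0.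
Proof. by rewrite (ipC P y) ip0l rmorph0. Qed.

Lemma ipDr x y z : ip z (x + y) = ip z x + ip z y.
Proof. by rewrite (ipC P z (x + y)) (ipC P z x) (ipC P z y) ipDl' rmorphD. Qed.

Lemma ipZr c x z : ip z (c *: x) = Num.conj c * ip z x.
Proof. by rewrite (ipC P z (c *: x)) (ipC P z x) ipZl rmorphM. Qed.

Lemma ip_sumr (I : Type) (r : seq I) (Q : pred I) (F : I -> V) z :
  ip z (\sum_(i <- r | Q i) F i) = \sum_(i <- r | Q i) ip z (F i).
Proof. by apply: (big_morph (fun x => ip z x)) => [x y|]; rewrite ?ipDr ?ip0r. Qed.

Lemma Im_ipxx x : complex.Im (ip x x) = 0.
Proof. by have := ip_ge0 P x; rewrite lecE /= => /andP[/eqP <-]. Qed.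

Lemma nrm2_ge0 x : 0 <= nrm2 x.
Proof. by have := ip_ge0 P x; rewrite lecE /= => /andP[_]. Qed.

Lemma nrm2_eq0 x : nrm2 x = 0 -> x = 0.
Proof.
move=> h; apply: (@ip_eq0 _ P); apply/eqP; rewrite eq_complex /= Im_ipxx.
by rewrite -/(nrm2 x) h !eqxx.
Qed.

Lemma nrm2_0 : nrm2 0 = 0.
Proof. by rewrite /nrm2 ip0l. Qed.

Lemma nrm2Z c x : nrm2 (c *: x) = cabs2 c * nrm2 x.
Proof.
by rewrite /nrm2 ipZl ipZr mulrA ReM_cabs2 // Im_ipxx.
Qed.

Lemma nrm_ge0 x : 0 <= nrm x.
Proof. exact: sqrtr_ge0. Qed.

Lemma nrmZ c x : nrm (c *: x) = cabs c * nrm x.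
Proof. by rewrite /nrm nrm2Z sqrtrM // cabs2_ge0. Qed.

Lemma nrm_sqr x : nrm x ^+ 2 = nrm2 x.
Proof. by rewrite /nrm sqr_sqrtr // nrm2_ge0. Qed.

Lemma nrm2D x y :
  nrm2 (x + y) = nrm2 x + 2 * complex.Re (ip x y) + nrm2 y.
Proof.
rewrite /nrm2 ipDl' !ipDr !ReD' [ip y x]ipC ReJ; ring.
Qed.

Lemma nrm2DR x y (t : R) :
  nrm2 (x + (t%:C)%C *: y) = nrm2 x + 2 * t * complex.Re (ip x y) + t ^+ 2 * nrm2 y.
Proof.
rewrite nrm2D nrm2Z cabs2R ipZr conjR ReRM; ring.
Qed.

Lemma CS x y : complex.Re (ip x y) ^+ 2 <= nrm2 x * nrm2 y.
Proof.
have [y0|ny] := eqVneq (nrm2 y) 0.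
  by rewrite (nrm2_eq0 y0) ip0r nrm2_0 mulr0 /= expr0n.
have sp : 0 < nrm2 y by rewrite lt_def ny nrm2_ge0.
set r := complex.Re (ip x y).
have := nrm2_ge0 (x + ((- (r / nrm2 y))%:C)%C *: y).
rewrite nrm2DR -/r => h.
have e : nrm2 x + 2 * - (r / nrm2 y) * r + (- (r / nrm2 y)) ^+ 2 * nrm2 y
       = nrm2 x - r ^+ 2 / nrm2 y.
  by field.
by rewrite e subr_ge0 ler_pdivrMr // in h.
Qed.

Lemma Re_ip_le x y : complex.Re (ip x y) <= nrm x * nrm y.
Proof.
have h := ler_wsqrtr (CS x y).
rewrite sqrtr_sqr sqrtrM ?nrm2_ge0 // in h.
exact: le_trans (ler_norm _) h.
Qed.

Lemma nrmD x y : nrm (x + y) <= nrm x + nrm y.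
Proof.
have h0 : 0 <= nrm x + nrm y by rewrite addr_ge0 // nrm_ge0.
rewrite -(ger0_norm h0) -sqrtr_sqr ler_wsqrtr //.
rewrite nrm2D sqrrD !nrm_sqr lerD2r mulr2n -[_ * _ *+ _ in X in _ <= X]mulr2n.
have := Re_ip_le x y; lra.
Qed.

Lemma nrm_sum (I : Type) (r : seq I) (Q : pred I) (F : I -> V) :
  nrm (\sum_(i <- r | Q i) F i) <= \sum_(i <- r | Q i) nrm (F i).
Proof.
elim/big_ind2: _ => [|a b c d h1 h2|//].
  by rewrite /nrm nrm2_0 sqrtr0.
exact: le_trans (nrmD _ _) (lerD h1 h2).
Qed.

End IPS.
Section Fam.
Variable R : realType.
Local Notation C := (R[i]).

Section FamDef.
Variable V : lmodType C.
Variable P : ipsp V.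
Variable n : nat.

Definition ipF (f g : 'I_n -> V) : C := \sum_i ipf P (f i) (g i).

Lemma ipF_Dl (c : C) (x y z : 'I_n -> V) :
  ipF (c *: x + y) z = c * ipF x z + ipF y z.
Proof.
rewrite /ipF mulr_sumr -big_split /=; apply: eq_bigr => i _.
exact: ipDl.
Qed.

Lemma ipF_C (x y : 'I_n -> V) : ipF x y = Num.conj (ipF y x).
Proof.
rewrite /ipF rmorph_sum; apply: eq_bigr => i _; exact: ipC.
Qed.

Lemma ipF_ge0 (x : 'I_n -> V) : 0 <= ipF x x.
Proof. by apply: sumr_ge0 => i _; exact: ip_ge0. Qed.

Lemma ipF_eq0 (x : 'I_n -> V) : ipF x x = 0 -> x = 0.
Proof.
move=> /eqP; rewrite psumr_eq0 => [/allP h|i _]; last exact: ip_ge0.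
apply: funext => i; apply: (ip_eq0 (i:=P)); apply/eqP; apply: h.
by rewrite mem_index_enum.
Qed.

Definition ipsF : ipsp ('I_n -> V) := IPS ipF_Dl ipF_C ipF_ge0 ipF_eq0.

Definition fN (f : 'I_n -> V) : R := \sum_i nrm2 P (f i).
Definition fnrm (f : 'I_n -> V) : R := Num.sqrt (fN f).

Lemma fN_ipsF f : nrm2 ipsF f = fN f.
Proof. by rewrite /nrm2 /= /ipF Re_sum. Qed.

Lemma fnrm_ipsF f : nrm ipsF f = fnrm f.
Proof. by rewrite /nrm fN_ipsF. Qed.

Lemma fN_ge0 f : 0 <= fN f.
Proof. by rewrite -fN_ipsF nrm2_ge0. Qed.

Lemma fnrm_ge0 f : 0 <= fnrm f.
Proof. exact: sqrtr_ge0. Qed.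

Lemma fNZ c f : fN (c *: f) = cabs2 c * fN f.
Proof. by rewrite -!fN_ipsF nrm2Z. Qed.

Lemma fnrmZ c f : fnrm (c *: f) = cabs c * fnrm f.
Proof. by rewrite -!fnrm_ipsF nrmZ. Qed.

Lemma fnrmD f g : fnrm (f + g) <= fnrm f + fnrm g.
Proof. by rewrite -!fnrm_ipsF nrmD. Qed.

Lemma fN_eq0 f : fN f = 0 -> f = 0.
Proof. by rewrite -fN_ipsF => /nrm2_eq0. Qed.

Lemma fN0 : fN 0 = 0.
Proof. by rewrite -fN_ipsF nrm2_0. Qed.

Lemma fN_comp f i : nrm2 P (f i) <= fN f.
Proof.
rewrite /fN (bigD1 i) //= lerDl; apply: sumr_ge0 => j _; exact: nrm2_ge0.
Qed.

End FamDef.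


Lemma sqrt_sum_le (I : Type) (s : seq I) (F : I -> R) : (forall i, 0 <= F i) ->
  Num.sqrt (\sum_(i <- s) F i) <= \sum_(i <- s) Num.sqrt (F i).
Proof.
move=> h; elim: s => [|a s IH]; first by rewrite !big_nil sqrtr0.
rewrite !big_cons; apply: le_trans (sqrt_le_add (h a) _) _.
  by apply: sumr_ge0 => i _.
by rewrite lerD2l.
Qed.

Lemma fnrm_le_sum (V : lmodType C) (P : ipsp V) n (f : 'I_n -> V) :
  fnrm P f <= \sum_i nrm P (f i).
Proof. by apply: sqrt_sum_le => i; exact: nrm2_ge0. Qed.

End Fam.
Arguments fN {R V} P {n} f.
Arguments fnrm {R V} P {n} f.
Arguments ipsF {R V} P n.
Definition opn (R : realType) (W1 W2 : Type) (N1 : W1 -> R) (N2 : W2 -> R)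
  (F : W1 -> W2) : \bar R :=
  ereal_sup [set (Num.sqrt (N2 (F w)))%:E | w in [set w | N1 w <= 1]].

Definition famop (V1 : Type) (V2 : zmodType) (p q : nat)
  (L : 'I_p -> 'I_q -> V1 -> V2) (xi : 'I_q -> V1) : 'I_p -> V2 :=
  fun i => \sum_j L i j (xi j).

Section Opn.
Variable R : realType.
Local Notation C := (R[i]).
Variables V1 V2 : lmodType C.
Variables (P1 : ipsp V1) (P2 : ipsp V2) (p q : nat).
Variable L : 'I_p -> 'I_q -> V1 -> V2.
Hypothesis Llin : forall i j (c : C) v w, L i j (c *: v + w) = c *: L i j v + L i j w.

Local Notation F := (famop L).
Local Notation op := (opn (fN P1) (fN P2) (famop L)).

Lemma L0 i j : L i j 0 = 0.
Proof.
have := Llin i j 1 0 0; rewrite scaler0 addr0 scale1r => /eqP.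
by rewrite -{1}[L i j 0]addr0 eq_sym => /eqP /addrI.
Qed.

Lemma LZ i j c v : L i j (c *: v) = c *: L i j v.
Proof. by have := Llin i j c v 0; rewrite !addr0 L0 addr0. Qed.

Lemma LD i j v w : L i j (v + w) = L i j v + L i j w.
Proof. by have := Llin i j 1 v w; rewrite !scale1r. Qed.

Lemma famopZ c xi : F (c *: xi) = c *: F xi.
Proof.
apply: funext => i; rewrite /famop; transitivity (c *: \sum_j L i j (xi j)) => //.
rewrite scaler_sumr; apply: eq_bigr => j _; exact: LZ.
Qed.

Lemma famopD xi zeta : F (xi + zeta) = F xi + F zeta.
Proof.
apply: funext => i; rewrite /famop.
transitivity (\sum_j L i j (xi j) + \sum_j L i j (zeta j)) => //.
rewrite -big_split; apply: eq_bigr => j _; exact: LD.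
Qed.

Lemma famop0 : F 0 = 0.
Proof. by have := famopZ 0 0; rewrite !scale0r. Qed.

Lemma opn_lb xi : fN P1 xi <= 1 -> ((fnrm P2 (F xi))%:E <= op)%E.
Proof. by move=> h; apply: ereal_sup_ubound; exists xi. Qed.

Lemma opn_ge0 : (0 <= op)%E.
Proof.
apply: le_trans (opn_lb (xi := 0) _); first by rewrite lee_fin fnrm_ge0.
by rewrite fN0.
Qed.

Lemma opn_ub (M : R) : (forall xi, fN P1 xi <= 1 -> fnrm P2 (F xi) <= M) ->
  (op <= M%:E)%E.
Proof. by move=> h; apply: ge_ereal_sup => _ [xi hxi <-]; rewrite lee_fin h. Qed.

Lemma famop_crude (k : 'I_p -> 'I_q -> R) :
  (forall i j, 0 <= k i j) ->
  (forall i j v, nrm P2 (L i j v) <= k i j * nrm P1 v) ->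
  forall xi, fnrm P2 (F xi) <= (\sum_i \sum_j k i j) * fnrm P1 xi.
Proof.
move=> k0 hk xi.
apply: le_trans (fnrm_le_sum _ _) _.
rewrite mulr_suml; apply: ler_sum => i _.
apply: le_trans (nrm_sum _ _ _ _) _.
rewrite mulr_suml; apply: ler_sum => j _.
apply: le_trans (hk _ _ _) _; apply: ler_wpM2l => //.
by apply: ler_wsqrtr; exact: fN_comp.
Qed.

Lemma opn_crude (k : 'I_p -> 'I_q -> R) :
  (forall i j, 0 <= k i j) ->
  (forall i j v, nrm P2 (L i j v) <= k i j * nrm P1 v) ->
  (op <= (\sum_i \sum_j k i j)%:E)%E.
Proof.
move=> k0 hk; apply: opn_ub => xi hxi.
apply: le_trans (famop_crude k0 hk xi) _.
rewrite -[X in _ <= X]mulr1; apply: ler_wpM2l.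
  by apply: sumr_ge0 => i _; apply: sumr_ge0.
by rewrite -sqrtr1 ler_wsqrtr.
Qed.

Lemma opn_fin (k : 'I_p -> 'I_q -> R) :
  (forall i j, 0 <= k i j) ->
  (forall i j v, nrm P2 (L i j v) <= k i j * nrm P1 v) ->
  op \is a fin_num.
Proof.
move=> k0 hk; rewrite ge0_fin_numE ?opn_ge0 //.
exact: le_lt_trans (opn_crude k0 hk) (ltry _).
Qed.

Lemma opn_le : op \is a fin_num ->
  forall xi, fnrm P2 (F xi) <= fine op * fnrm P1 xi.
Proof.
move=> fop xi.
have op0 : 0 <= fine op by apply: fine_ge0; exact: opn_ge0.
have [z|nz] := eqVneq (fN P1 xi) 0.
  have -> : xi = 0 by exact: fN_eq0 z.
  by rewrite famop0 /fnrm !fN0 sqrtr0 mulr0.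
have sp : 0 < fnrm P1 xi.
  by rewrite /fnrm sqrtr_gt0 lt_def nz fN_ge0.
set s := fnrm P1 xi.
have h : fN P1 (((s^-1)%:C)%C *: xi) <= 1.
  rewrite fNZ cabs2R -[fN P1 xi](@sqr_sqrtr _ (fN P1 xi)) ?fN_ge0 // -/(fnrm _ _) -/s.
  by rewrite -exprMn mulVf ?expr1n // gt_eqF.
have := opn_lb h; rewrite famopZ fnrmZ -[X in (_ <= X)%E](fineK fop) lee_fin.
rewrite /cabs cabs2R sqrtr_sqr ger0_norm; last by rewrite invr_ge0 ltW.
by rewrite ler_pdivrMl // mulrC.
Qed.

Lemma opn_le2 : op \is a fin_num ->
  forall xi, fN P2 (F xi) <= fine op ^+ 2 * fN P1 xi.
Proof.
move=> fop xi; have h := opn_le fop xi.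
have op0 : 0 <= fine op by apply: fine_ge0; exact: opn_ge0.
rewrite -(sqr_sqrtr (fN_ge0 P2 _)) -(sqr_sqrtr (fN_ge0 P1 xi)) -exprMn.
rewrite lerXn2r ?nnegrE //; last by rewrite mulr_ge0 // sqrtr_ge0.
Qed.

End Opn.
Section Ortho.
Variable R : realType.
Local Notation C := (R[i]).
Variable V : lmodType C.
Variable P : ipsp V.
Local Notation ip := (ipf P).

Definition orthoN (m : nat) (e : nat -> V) :=
  forall k l, (k < m)%N -> (l < m)%N -> k != l -> ip (e k) (e l) = 0.

Lemma ortho_decomp_aux (q : nat) (eta : 'I_q -> V) (m : nat) : (m <= q)%N ->
  exists (e : nat -> V) (c : 'I_q -> nat -> C), orthoN m e /\
    (forall j : 'I_q, (j < m)%N -> eta j = \sum_(k < m) c j k *: e k).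
Proof.
elim: m => [_|m IH hmq].
  by exists (fun _ => 0), (fun _ _ => 0); split.
have hm : (m < q)%N by [].
have [e [c [ho hd]]] := IH (ltnW hmq).
set em := eta (Ordinal hm).
pose a k := ip em (e k) / ip (e k) (e k).
pose r := em - \sum_(k < m) a k *: e k.
have hr : forall l, (l < m)%N -> ip r (e l) = 0.
  move=> l hl; rewrite /r ipBl ip_suml.
  rewrite (bigD1 (Ordinal hl)) //= big1 ?addr0; last first.
    by move=> k hk; rewrite ipZl ho ?mulr0.
  rewrite ipZl /a.
  have [z|nz] := eqVneq (ip (e l) (e l)) 0.
    by rewrite (ip_eq0 z) !ip0r mulr0 subr0.
  by rewrite divfK // subrr.
exists (fun k => if k == m then r else e k).
exists (fun (j : 'I_q) k => if (j == m :> nat) then (if k == m then 1 else a k)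
                 else (if k == m then 0 else c j k)).
split.
  move=> k l hk hl hkl.
  case: (eqVneq k m) => [ekm|nkm]; case: (eqVneq l m) => [elm|nlm].
  - by move: hkl; rewrite ekm elm eqxx.
  - by rewrite hr // ltn_neqAle nlm -ltnS.
  - by rewrite ipC hr ?rmorph0 // ltn_neqAle nkm -ltnS.
  - by rewrite ho // ltn_neqAle ?nkm ?nlm -ltnS.
move=> j hj; rewrite big_ord_recr /=.
have e1 : forall k : 'I_m, (nat_of_ord k == m) = false.
  by move=> k; apply: ltn_eqF.
under eq_bigr => k _ do rewrite e1.
rewrite eqxx.
case: (eqVneq (nat_of_ord j) m) => [ejm|njm].
  have -> : j = Ordinal hm by apply: val_inj.
  by rewrite scale1r /r addrC subrK.
rewrite scale0r addr0 hd //; last by rewrite ltn_neqAle njm -ltnS.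
Qed.

Lemma ortho_decomp (q : nat) (eta : 'I_q -> V) :
  exists (e : nat -> V) (c : 'I_q -> nat -> C), orthoN q e /\
    (forall j : 'I_q, eta j = \sum_(k < q) c j k *: e k).
Proof.
have [e [c [ho hd]]] := ortho_decomp_aux eta (leqnn q).
by exists e, c; split => // j; apply: hd.
Qed.

Lemma pyth (d : nat) (e : nat -> V) (z : nat -> C) : orthoN d e ->
  nrm2 P (\sum_(k < d) z k *: e k) = \sum_(k < d) cabs2 (z k) * nrm2 P (e k).
Proof.
move=> ho; rewrite /nrm2 ip_suml Re_sum; apply: eq_bigr => k _.
have z0 : \sum_(l < d | l != k) ip (e k) (z l *: e l) = 0.
  apply: big1 => l hl; rewrite ipZr ho ?mulr0 //.
  by apply: contra hl => /eqP hl; apply/eqP/val_inj.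
rewrite ipZl ip_sumr (bigD1 k) //= z0 addr0.
by rewrite ipZr mulrA ReM_cabs2 // Im_ipxx.
Qed.

Lemma ten (p q : nat) (g : 'M[C]_(p, q)) (N : R) : 0 <= N ->
  (forall z : 'I_q -> C, \sum_i cabs2 (\sum_j g i j * z j) <= N * \sum_j cabs2 (z j)) ->
  forall eta : 'I_q -> V,
    fN P (fun i => \sum_j g i j *: eta j) <= N * fN P eta.
Proof.
move=> N0 hg eta.
have [e [c [ho hd]]] := ortho_decomp eta.
have E : forall i, \sum_j g i j *: eta j = \sum_(k < q) (\sum_j g i j * c j k) *: e k.
  move=> i; under eq_bigr => j _ do rewrite hd scaler_sumr.
  rewrite exchange_big /=; apply: eq_bigr => k _.
  by rewrite scaler_suml; apply: eq_bigr => j _; rewrite scalerA.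
rewrite /fN.
under eq_bigr => i _ do rewrite E (pyth (fun k => \sum_j g i j * c j k) ho).
under [X in _ <= N * X]eq_bigr => j _ do rewrite hd (pyth (c j) ho).
rewrite exchange_big /= [X in _ <= N * X]exchange_big /= mulr_sumr.
apply: ler_sum => k _.
rewrite -[in X in _ <= X]mulr_suml mulrA -mulr_suml.
apply: ler_wpM2r; first exact: nrm2_ge0.
exact: (hg (fun j => c j k)).
Qed.

End Ortho.
Section Lin.
Variable R : realType.
Local Notation C := (R[i]).
Variables V1 V2 : lmodType C.
Variable f : V1 -> V2.
Hypothesis flin : forall (c : C) v w, f (c *: v + w) = c *: f v + f w.

Lemma lin0 : f 0 = 0.
Proof.
have := flin 1 0 0; rewrite scaler0 addr0 scale1r => /eqP.
by rewrite -{1}[f 0]addr0 eq_sym => /eqP /addrI.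
Qed.

Lemma linZ c v : f (c *: v) = c *: f v.
Proof. by have := flin c v 0; rewrite !addr0 lin0 addr0. Qed.

Lemma linD v w : f (v + w) = f v + f w.
Proof. by have := flin 1 v w; rewrite !scale1r. Qed.

Lemma lin_sum (I : Type) (r : seq I) (P : pred I) (F : I -> V1) :
  f (\sum_(i <- r | P i) F i) = \sum_(i <- r | P i) f (F i).
Proof. by apply: (big_morph f linD lin0). Qed.
End Lin.

Definition ipsH (R : realType) (H : hilbert R) : ipsp (hspace H) :=
  IPS (@hinnerDl R H) (@hinnerC R H) (@hinner_ge0 R H) (@hinner_eq0 R H).

Section IpsC.
Variable R : realType.
Local Notation C := (R[i]).
Definition ipC0 (z w : C^o) : C := z * Num.conj w.
Lemma ipC0_Dl (c : C) (x y z : C^o) : ipC0 (c *: x + y) z = c * ipC0 x z + ipC0 y z.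
Proof. by rewrite /ipC0 mulrDl mulrA. Qed.
Lemma ipC0_C (x y : C^o) : ipC0 x y = Num.conj (ipC0 y x).
Proof. by case: x => a b; case: y => c d; rewrite /ipC0 /=; congr Complex; ring. Qed.
Lemma ipC0_ge0 (x : C^o) : 0 <= ipC0 x x.
Proof. exact: mul_conjC_ge0. Qed.
Lemma ipC0_eq0 (x : C^o) : ipC0 x x = 0 -> x = 0.
Proof. by move/eqP; rewrite /ipC0 mul_conjC_eq0 => /eqP. Qed.
Definition ipsC : ipsp (C^o) := IPS ipC0_Dl ipC0_C ipC0_ge0 ipC0_eq0.
End IpsC.

Section BOIfacts.
Variables (R : realType) (X A : finType).
Local Notation C := (R[i]).
Variable U : boi R X A.
Local Notation H := (hspace (bH U)).
Local Notation K := (hspace (bK U)).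
Local Notation PH := (ipsH (bH U)).
Local Notation PK := (ipsH (bK U)).

Lemma bU_lin' a x : forall (c : C) (h h' : H), bU a x (c *: h + h') = c *: bU a x h + bU a x h'.
Proof. exact: bU_lin. Qed.

Lemma bU_le a x (h : H) : nrm2 PK (bU a x h) <= nrm2 PH h.
Proof.
pose xi := fun x' => if x' == x then h else 0.
have := bU_iso xi.
have e1 : forall a', \sum_x' bU a' x' (xi x') = bU a' x h.
  move=> a'; rewrite (bigD1 x) //= /xi eqxx big1 ?addr0 // => y hy.
  by rewrite (negbTE hy) (lin0 (bU_lin' a' y)).
have e2 : \sum_x' sqn (xi x') = sqn h.
  rewrite (bigD1 x) //= /xi eqxx big1 ?addr0 // => y hy.
  by rewrite (negbTE hy); exact: (nrm2_0 PH).
under eq_bigr => a' _ do rewrite e1.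
rewrite e2 => E; rewrite -[nrm2 PH h]/(sqn h) -E.
rewrite (bigD1 a) //= lerDl; apply: sumr_ge0 => b _; exact: (nrm2_ge0 PK).
Qed.

Lemma bU_nrm a x (h : H) : nrm PK (bU a x h) <= nrm PH h.
Proof. exact/ler_wsqrtr/bU_le. Qed.

Lemma phi_lin (S : S1 R X A) (c : C) (v w : H) :
  phi S (c *: v + w) = c *: phi S v + phi S w.
Proof.
rewrite /phi scaler_sumr -big_split; apply: eq_bigr => x _ /=.
rewrite scaler_sumr -big_split; apply: eq_bigr => a _ /=.
by rewrite bU_lin' scalerDr !scalerA mulrC.
Qed.

Lemma phiZS (S : S1 R X A) c (h : H) : phi (c *: S) h = c *: phi S h.
Proof.
rewrite /phi scaler_sumr; apply: eq_bigr => x _.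
rewrite scaler_sumr; apply: eq_bigr => a _.
by rewrite ffunE scalerA.
Qed.

Lemma phiDS (S T : S1 R X A) (h : H) : phi (S + T) h = phi S h + phi T h.
Proof.
rewrite /phi -big_split; apply: eq_bigr => x _.
rewrite -big_split; apply: eq_bigr => a _.
by rewrite ffunE scalerDl.
Qed.

Lemma phi0S (h : H) : phi (0 : S1 R X A) h = 0.
Proof.
rewrite /phi big1 // => x _; rewrite big1 // => a _.
by rewrite ffunE scale0r.
Qed.

Lemma phi_sumS (I : Type) (r : seq I) (P : pred I) (F : I -> S1 R X A) (h : H) :
  phi (\sum_(i <- r | P i) F i) h = \sum_(i <- r | P i) phi (F i) h.
Proof. by apply: (big_morph (fun S => phi S h) (fun S T => phiDS S T h) (phi0S h)). Qed.

Definition Kc (S : S1 R X A) : R := \sum_x \sum_a cabs (S (x, a)).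

Lemma Kc_ge0 S : 0 <= Kc S.
Proof. by apply: sumr_ge0 => x _; apply: sumr_ge0 => a _; exact: cabs_ge0. Qed.

Lemma phi_crude (S : S1 R X A) (h : H) : nrm PK (phi S h) <= Kc S * nrm PH h.
Proof.
rewrite /Kc /phi mulr_suml.
apply: le_trans (nrm_sum _ _ _ _) _; apply: ler_sum => x _.
rewrite mulr_suml.
apply: le_trans (nrm_sum _ _ _ _) _; apply: ler_sum => a _.
rewrite nrmZ; apply: ler_wpM2l; first exact: cabs_ge0.
exact: bU_nrm.
Qed.

End BOIfacts.
Section Ampl.
Variables (R : realType) (X A : finType).
Local Notation C := (R[i]).
Local Notation S := (S1 R X A).
Variable U : boi R X A.
Local Notation H := (hspace (bH U)).
Local Notation K := (hspace (bK U)).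
Local Notation PH := (ipsH (bH U)).
Local Notation PK := (ipsH (bK U)).

Definition Tm n (u : 'M[S]_n) := famop (fun i j => phi (U:=U) (u i j)).

Lemma Tm_lin n (u : 'M[S]_n) : forall i j (c : C) (v w : H),
  phi (u i j) (c *: v + w) = c *: phi (u i j) v + phi (u i j) w.
Proof. by move=> i j c v w; apply: phi_lin. Qed.

Lemma ampl_opnE n (u : 'M[S]_n) :
  ampl_norm U u = opn (fN PH) (fN PK) (Tm u).
Proof. by []. Qed.

Definition Bm n (u : 'M[S]_n) : R := \sum_i \sum_j Kc (u i j).

Lemma ampl_crude n (u : 'M[S]_n) : (ampl_norm U u <= (Bm u)%:E)%E.
Proof.
rewrite ampl_opnE; apply: opn_crude => i j; first exact: Kc_ge0.
by move=> v; apply: phi_crude.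
Qed.

Lemma ampl_ge0 n (u : 'M[S]_n) : (0 <= ampl_norm U u)%E.
Proof. by rewrite ampl_opnE; apply: opn_ge0. Qed.

Lemma ampl_fin n (u : 'M[S]_n) : ampl_norm U u \is a fin_num.
Proof.
rewrite ampl_opnE; apply: (opn_fin (k := fun i j => Kc (u i j))) => i j; first exact: Kc_ge0.
by move=> v; apply: phi_crude.
Qed.

Lemma ampl_le n (u : 'M[S]_n) xi :
  fnrm PK (Tm u xi) <= fine (ampl_norm U u) * fnrm PH xi.
Proof. by rewrite ampl_opnE; apply: (opn_le (Tm_lin u)); rewrite -ampl_opnE ampl_fin. Qed.

Lemma ampl_le2 n (u : 'M[S]_n) xi :
  fN PK (Tm u xi) <= fine (ampl_norm U u) ^+ 2 * fN PH xi.
Proof. by rewrite ampl_opnE; apply: (opn_le2 (Tm_lin u)); rewrite -ampl_opnE ampl_fin. Qed.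

Lemma ampl_ub n (u : 'M[S]_n) (M : R) :
  (forall xi, fN PH xi <= 1 -> fnrm PK (Tm u xi) <= M) -> (ampl_norm U u <= M%:E)%E.
Proof. by move=> h; rewrite ampl_opnE; apply: opn_ub. Qed.

Lemma fine_ampl_ge0 n (u : 'M[S]_n) : 0 <= fine (ampl_norm U u).
Proof. exact/fine_ge0/ampl_ge0. Qed.

Lemma ampl_le1 n (u : 'M[S]_n) xi : fN PH xi <= 1 ->
  fnrm PK (Tm u xi) <= fine (ampl_norm U u).
Proof.
move=> h; apply: le_trans (ampl_le u xi) _.
rewrite -[X in _ <= X]mulr1 ler_wpM2l ?fine_ampl_ge0 //.
by rewrite -sqrtr1 ler_wsqrtr.
Qed.

Lemma Tm_scale n (c : C) (u : 'M[S]_n) xi : Tm (mx_scale c u) xi = c *: Tm u xi.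
Proof.
apply: funext => i; rewrite /Tm /famop.
transitivity (c *: \sum_j phi (u i j) (xi j)) => //.
rewrite scaler_sumr; apply: eq_bigr => j _.
by rewrite /mx_scale mxE phiZS.
Qed.

Lemma ampl_scale_le n (c : C) (u : 'M[S]_n) :
  (ampl_norm U (mx_scale c u) <= (cabs c * fine (ampl_norm U u))%:E)%E.
Proof.
apply: ampl_ub => xi hxi; rewrite Tm_scale fnrmZ.
by apply: ler_wpM2l; [exact: cabs_ge0 | exact: ampl_le1].
Qed.

Lemma Tm_add n (u v : 'M[S]_n) xi : Tm (u + v) xi = Tm u xi + Tm v xi.
Proof.
apply: funext => i; rewrite /Tm /famop.
transitivity (\sum_j phi (u i j) (xi j) + \sum_j phi (v i j) (xi j)) => //.
rewrite -big_split; apply: eq_bigr => j _.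
by rewrite mxE phiDS.
Qed.

Lemma ampl_add_le n (u v : 'M[S]_n) :
  (ampl_norm U (u + v) <= (fine (ampl_norm U u) + fine (ampl_norm U v))%:E)%E.
Proof.
apply: ampl_ub => xi hxi; rewrite Tm_add.
apply: le_trans (fnrmD _ _ _) _.
by apply: lerD; apply: ampl_le1.
Qed.

End Ampl.
Arguments Tm {R X A} U {n} u.
Section Cmx.
Variable R : realType.
Local Notation C := (R[i]).
Variables (p q : nat) (g : 'M[C]_(p, q)).

Definition cmxL := fun (i : 'I_p) (j : 'I_q) (z : C^o) => (g i j * z : C^o).

Lemma cmx_opnE : cmx_norm g = opn (fN (ipsC R)) (fN (ipsC R)) (famop cmxL).
Proof. by []. Qed.

Lemma cmx_lin : forall i j (c : C) (v w : C^o),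
  cmxL i j (c *: v + w) = c *: cmxL i j v + cmxL i j w.
Proof. by move=> i j c v w; rewrite /cmxL /= mulrDr mulrCA. Qed.

Lemma cmx_crude i j (v : C^o) : nrm (ipsC R) (cmxL i j v) <= cabs (g i j) * nrm (ipsC R) v.
Proof. by rewrite /cmxL -[g i j * v]/(g i j *: v) nrmZ. Qed.

Lemma cmx_fin : cmx_norm g \is a fin_num.
Proof.
rewrite cmx_opnE; apply: (opn_fin (k := fun i j => cabs (g i j))) => i j.
  exact: cabs_ge0.
exact: cmx_crude.
Qed.

Lemma cmx_ge0 : 0 <= fine (cmx_norm g).
Proof. by apply: fine_ge0; rewrite cmx_opnE; apply: opn_ge0. Qed.

Lemma cmx_le2 (z : 'I_q -> C) :
  \sum_i cabs2 (\sum_j g i j * z j) <= fine (cmx_norm g) ^+ 2 * \sum_j cabs2 (z j).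
Proof.
exact: (opn_le2 (P1 := ipsC R) (P2 := ipsC R) cmx_lin cmx_fin z).
Qed.

Lemma ten_cmx (V : lmodType C) (P : ipsp V) (eta : 'I_q -> V) :
  fnrm P (fun i => \sum_j g i j *: eta j) <= fine (cmx_norm g) * fnrm P eta.
Proof.
have h := @ten R V P p q g _ (sqr_ge0 (fine (cmx_norm g))) cmx_le2 eta.
rewrite /fnrm -(ger0_norm cmx_ge0) -sqrtr_sqr -sqrtrM ?sqr_ge0 //.
exact: ler_wsqrtr.
Qed.
End Cmx.

Section Block.
Variables (R : realType) (X A : finType).
Local Notation C := (R[i]).
Local Notation S := (S1 R X A).
Variable U : boi R X A.
Local Notation H := (hspace (bH U)).
Local Notation K := (hspace (bK U)).
Local Notation PH := (ipsH (bH U)).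
Local Notation PK := (ipsH (bK U)).

Lemma fN_split (V : lmodType C) (P : ipsp V) n m (f : 'I_(n + m) -> V) :
  fN P f = fN P (fun j => f (lshift m j)) + fN P (fun j => f (rshift n j)).
Proof. by rewrite /fN big_split_ord. Qed.

Lemma Tm_block_l n m (v : 'M[S]_n) (w : 'M[S]_m) (xi : 'I_(n + m) -> H) :
  (fun i => Tm U (block_mx v 0 0 w) xi (lshift m i)) =
  Tm U v (fun j => xi (lshift m j)).
Proof.
apply: funext => i; rewrite /Tm /famop big_split_ord /=.
rewrite [X in _ + X]big1 ?addr0.
  by apply: eq_bigr => j _; rewrite block_mxEul.
by move=> j _; rewrite block_mxEur mxE phi0S.
Qed.

Lemma Tm_block_r n m (v : 'M[S]_n) (w : 'M[S]_m) (xi : 'I_(n + m) -> H) :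
  (fun i => Tm U (block_mx v 0 0 w) xi (rshift n i)) =
  Tm U w (fun j => xi (rshift n j)).
Proof.
apply: funext => i; rewrite /Tm /famop big_split_ord /=.
rewrite [X in X + _]big1 ?add0r.
  by apply: eq_bigr => j _; rewrite block_mxEdr.
by move=> j _; rewrite block_mxEdl mxE phi0S.
Qed.

Lemma fN_Tm_block n m (v : 'M[S]_n) (w : 'M[S]_m) (xi : 'I_(n + m) -> H) :
  fN PK (Tm U (block_mx v 0 0 w) xi) =
  fN PK (Tm U v (fun j => xi (lshift m j))) + fN PK (Tm U w (fun j => xi (rshift n j))).
Proof. by rewrite fN_split Tm_block_l Tm_block_r. Qed.

Lemma ampl_block n m (v : 'M[S]_n) (w : 'M[S]_m) :
  ampl_norm U (block_mx v 0 0 w) = maxe (ampl_norm U v) (ampl_norm U w).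
Proof.
set a := fine (ampl_norm U v); set b := fine (ampl_norm U w).
apply/eqP; rewrite eq_le; apply/andP; split.
  rewrite -(fineK (ampl_fin U v)) -(fineK (ampl_fin U w)) -EFin_max.
  apply: ampl_ub => xi hxi.
  set M := Num.max a b.
  have a0 : 0 <= a := fine_ampl_ge0 U v.
  have b0 : 0 <= b := fine_ampl_ge0 U w.
  have aM : a <= M by rewrite le_max lexx.
  have bM : b <= M by rewrite le_max lexx orbT.
  have M0 : 0 <= M := le_trans a0 aM.
  rewrite /fnrm fN_Tm_block.
  have h1 := ampl_le2 (U:=U) v (fun j => xi (lshift m j)).
  have h2 := ampl_le2 (U:=U) w (fun j => xi (rshift n j)).
  rewrite fN_split in hxi.
  set x1 := fN PH _ in h1 hxi; set x2 := fN PH _ in h2 hxi.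
  have x10 : 0 <= x1 by apply: fN_ge0.
  have x20 : 0 <= x2 by apply: fN_ge0.
  rewrite -/a in h1; rewrite -/b in h2.
  rewrite -(ger0_norm M0) -sqrtr_sqr; apply: ler_wsqrtr.
  have a2 : a ^+ 2 <= M ^+ 2 by rewrite lerXn2r ?nnegrE.
  have b2 : b ^+ 2 <= M ^+ 2 by rewrite lerXn2r ?nnegrE.
  have M20 : 0 <= M ^+ 2 by apply: sqr_ge0.
  nra.
rewrite ge_max; apply/andP; split.
  rewrite -[X in (_ <= X)%E](fineK (ampl_fin U (block_mx v 0 0 w))).
  apply: ampl_ub => xi1 hxi1.
  pose xi := fun j : 'I_(n + m) => if fintype.split j is inl j1 then xi1 j1 else 0.
  have e1 : (fun j => xi (lshift m j)) = xi1.
    by apply: funext => j; rewrite /xi (unsplitK (inl _ j)).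
  have e2 : (fun j => xi (rshift n j)) = 0.
    by apply: funext => j; rewrite /xi (unsplitK (inr _ j)).
  have hx : fN PH xi <= 1 by rewrite fN_split e1 e2 fN0 addr0.
  have := ampl_le1 (U:=U) (block_mx v 0 0 w) hx.
  have t0 : Tm U w 0 = 0 := famop0 (Tm_lin (U:=U) w).
  by rewrite /fnrm fN_Tm_block e1 e2 t0 fN0 addr0.
rewrite -[X in (_ <= X)%E](fineK (ampl_fin U (block_mx v 0 0 w))).
apply: ampl_ub => xi2 hxi2.
pose xi := fun j : 'I_(n + m) => if fintype.split j is inr j2 then xi2 j2 else 0.
have e1 : (fun j => xi (lshift m j)) = 0.
  by apply: funext => j; rewrite /xi (unsplitK (inl _ j)).
have e2 : (fun j => xi (rshift n j)) = xi2.
  by apply: funext => j; rewrite /xi (unsplitK (inr _ j)).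
have hx : fN PH xi <= 1 by rewrite fN_split e1 e2 fN0 add0r.
have := ampl_le1 (U:=U) (block_mx v 0 0 w) hx.
have t0 : Tm U v 0 = 0 := famop0 (Tm_lin (U:=U) v).
by rewrite /fnrm fN_Tm_block e1 e2 t0 fN0 add0r.
Qed.

End Block.
Section Mul3.
Variables (R : realType) (X A : finType).
Local Notation C := (R[i]).
Local Notation S := (S1 R X A).
Variable U : boi R X A.
Local Notation H := (hspace (bH U)).
Local Notation K := (hspace (bK U)).
Local Notation PH := (ipsH (bH U)).
Local Notation PK := (ipsH (bK U)).

Lemma Tm_mul3 n m (al : 'M[C]_(n, m)) (v : 'M[S]_m) (be : 'M[C]_(m, n))
  (xi : 'I_n -> H) :
  Tm U (mx_mul3 al v be) xi =
  (fun i => \sum_k al i k *: Tm U v (fun l => \sum_j be l j *: xi j) k).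
Proof.
apply: funext => i; rewrite /Tm /famop /mx_mul3 /=.
transitivity (\sum_k \sum_l \sum_j (al i k * be l j) *: phi (v k l) (xi j)).
  have L1 : forall j, phi ((\matrix_(i0, j0) \sum_k \sum_l (al i0 k * be l j0) *: v k l) i j) (xi j)
      = \sum_k \sum_l (al i k * be l j) *: phi (v k l) (xi j).
    move=> j; rewrite mxE phi_sumS; apply: eq_bigr => k _.
    rewrite phi_sumS; apply: eq_bigr => l _; exact: phiZS.
  under eq_bigr => j _ do rewrite L1.
  rewrite exchange_big /=; apply: eq_bigr => k _.
  by rewrite exchange_big.
apply: eq_bigr => k _; rewrite scaler_sumr; apply: eq_bigr => l _.
rewrite (lin_sum (phi_lin (v k l))) scaler_sumr; apply: eq_bigr => j _.
by rewrite (linZ (phi_lin (v k l))) !scalerA.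
Qed.

Lemma ampl_mul3 n m (al : 'M[C]_(n, m)) (v : 'M[S]_m) (be : 'M[C]_(m, n)) :
  (ampl_norm U (mx_mul3 al v be) <=
   (fine (cmx_norm al) * fine (ampl_norm U v) * fine (cmx_norm be))%:E)%E.
Proof.
apply: ampl_ub => xi hxi; rewrite Tm_mul3.
have ca := cmx_ge0 al; have cb := cmx_ge0 be; have av := fine_ampl_ge0 U v.
apply: le_trans (ten_cmx al PK _) _.
rewrite -mulrA; apply: ler_wpM2l => //.
apply: le_trans (ampl_le (U:=U) v _) _.
apply: ler_wpM2l => //.
apply: le_trans (ten_cmx be PH _) _.
rewrite -[X in _ <= X]mulr1; apply: ler_wpM2l => //.
by rewrite -sqrtr1 ler_wsqrtr.
Qed.
End Mul3.
Section Res.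
Variables (R : realType) (X A : finType).
Local Notation C := (R[i]).
Local Notation S := (S1 R X A).
Variable Rs : boi R X A -> Prop.
Hypotheses (hX : (0 < #|X|)%N) (hA : (0 < #|A|)%N) (HR : is_resource Rs).

Lemma Rs_ne : exists U, Rs U.
Proof.
have /card_gt0P [x _] := hX; have /card_gt0P [a _] := hA.
pose S0 : S := [ffun _ => 1].
have nz : S0 != 0.
  apply/eqP => /ffunP /(_ (x, a)); rewrite !ffunE => /eqP.
  by rewrite oner_eq0.
by have [U [hU _]] := HR.2 _ nz; exists U.
Qed.

Lemma res_lb U n (u : 'M[S]_n) : Rs U -> (ampl_norm U u <= res_norm Rs u)%E.
Proof. by move=> hU; apply: ereal_sup_ubound; exists U. Qed.

Lemma res_ub n (u : 'M[S]_n) M :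
  (forall U, Rs U -> (ampl_norm U u <= M)%E) -> (res_norm Rs u <= M)%E.
Proof. by move=> h; apply: ge_ereal_sup => _ [U hU ->]; apply: h. Qed.

Lemma res_ge0 n (u : 'M[S]_n) : (0 <= res_norm Rs u)%E.
Proof.
have [U hU] := Rs_ne; apply: le_trans (res_lb u hU); exact: ampl_ge0.
Qed.

Lemma res_fin n (u : 'M[S]_n) : res_norm Rs u \is a fin_num.
Proof.
rewrite ge0_fin_numE ?res_ge0 //.
apply: le_lt_trans (ltry (Bm u)).
by apply: res_ub => U _; apply: ampl_crude.
Qed.

Lemma fine_ampl_res U n (u : 'M[S]_n) : Rs U ->
  fine (ampl_norm U u) <= fine (res_norm Rs u).
Proof. by move=> hU; apply: fine_le; [exact: ampl_fin | exact: res_fin | exact: res_lb]. Qed.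

Lemma mx_scaleK n (c : C) (u : 'M[S]_n) : c != 0 ->
  mx_scale c^-1 (mx_scale c u) = u.
Proof.
by move=> c0; apply/matrixP => i j; rewrite /mx_scale !mxE scalerA mulVf // scale1r.
Qed.

Lemma res_scale_le n (c : C) (u : 'M[S]_n) :
  (res_norm Rs (mx_scale c u) <= (cabs c * fine (res_norm Rs u))%:E)%E.
Proof.
apply: res_ub => U hU; apply: le_trans (ampl_scale_le U c u) _.
by rewrite lee_fin ler_wpM2l ?cabs_ge0 // fine_ampl_res.
Qed.

Lemma cabs1 : cabs (1 : C) = 1.
Proof. by rewrite /cabs /cabs2 /= oppr0 !mul0r subr0 mul1r sqrtr1. Qed.

Lemma res_scale n (c : C) (u : 'M[S]_n) :
  res_norm Rs (mx_scale c u) = ((cabs c)%:E * res_norm Rs u)%E.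
Proof.
rewrite -(fineK (res_fin (mx_scale c u))) -(fineK (res_fin u)) -EFinM.
congr EFin; apply/le_anti/andP; split.
  by have := res_scale_le c u; rewrite -{1}(fineK (res_fin _)) lee_fin.
have [->|c0] := eqVneq c 0.
  rewrite /cabs /cabs2 mul0r /= sqrtr0 mul0r; exact/fine_ge0/res_ge0.
have h := res_scale_le c^-1 (mx_scale c u).
rewrite mx_scaleK // -{1}(fineK (res_fin u)) lee_fin in h.
have e : cabs c^-1 = (cabs c)^-1.
  apply: (@mulfI _ (cabs c)).
    apply/eqP => /(congr1 (fun t => t ^+ 2)); rewrite cabs_sqr expr0n /=.
    by move/cabs2_eq0; apply/eqP.
  rewrite -cabsM mulfV // divff ?cabs1 //.
  apply/eqP => /(congr1 (fun t => t ^+ 2)); rewrite cabs_sqr expr0n /=.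
  by move/cabs2_eq0; apply/eqP.
have cp : 0 < cabs c.
  rewrite lt_def cabs_ge0 andbT; apply/eqP => /(congr1 (fun t => t ^+ 2)).
  rewrite cabs_sqr expr0n /=; by move/cabs2_eq0; apply/eqP.
by rewrite e ler_pdivlMl // in h.
Qed.

Lemma res_def n (u : 'M[S]_n) : res_norm Rs u = 0%E -> u = 0.
Proof.
move=> h0; apply/matrixP => i j; rewrite mxE.
case: (eqVneq (u i j) 0) => // hne; exfalso.
have [U [hU [h hh]]] := HR.2 _ hne.
have a0 : ampl_norm U u = 0%E.
  apply/le_anti/andP; split; last exact: ampl_ge0.
  by rewrite -h0; apply: res_lb.
pose xi := fun j' : 'I_n => if j' == j then h else 0.
have := ampl_le2 (U:=U) u xi; rewrite a0 /= expr0n mul0r => hle.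
have e : Tm U u xi i = phi (u i j) h.
  rewrite /Tm /famop (bigD1 j) //= /xi eqxx big1 ?addr0 // => j' hj'.
  by rewrite (negbTE hj') (lin0 (phi_lin (u i j'))).
have := fN_comp (ipsH (bK U)) (Tm U u xi) i; rewrite e => hc.
have z : nrm2 (ipsH (bK U)) (phi (u i j) h) = 0.
  by apply/le_anti/andP; split; [exact: le_trans hc hle | exact: nrm2_ge0].
by move/eqP: hh; apply; exact: nrm2_eq0 z.
Qed.

Lemma res_add n (u v : 'M[S]_n) :
  (res_norm Rs (u + v) <= res_norm Rs u + res_norm Rs v)%E.
Proof.
rewrite -(fineK (res_fin u)) -(fineK (res_fin v)) -EFinD.
apply: res_ub => U hU; apply: le_trans (ampl_add_le U u v) _.
by rewrite lee_fin lerD // fine_ampl_res.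
Qed.

Lemma res_block n m (v : 'M[S]_n) (w : 'M[S]_m) :
  res_norm Rs (block_mx v 0 0 w) = maxe (res_norm Rs v) (res_norm Rs w).
Proof.
apply/eqP; rewrite eq_le; apply/andP; split.
  apply: res_ub => U hU; rewrite ampl_block ge_max; apply/andP; split;
  rewrite le_max; apply/orP; [left|right]; exact: res_lb.
rewrite ge_max; apply/andP; split; apply: res_ub => U hU;
  apply: le_trans (res_lb (block_mx v 0 0 w) hU);
  by rewrite ampl_block le_max lexx ?orbT.
Qed.

Lemma res_mul3 n m (al : 'M[C]_(n, m)) (v : 'M[S]_m) (be : 'M[C]_(m, n)) :
  (res_norm Rs (mx_mul3 al v be) <= cmx_norm al * res_norm Rs v * cmx_norm be)%E.
Proof.
rewrite -(fineK (cmx_fin al)) -(fineK (cmx_fin be)) -(fineK (res_fin v)) -!EFinM.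
apply: res_ub => U hU; apply: le_trans (ampl_mul3 U al v be) _.
rewrite lee_fin ler_wpM2r ?cmx_ge0 // ler_wpM2l ?cmx_ge0 //.
exact: fine_ampl_res.
Qed.

End Res.

Theorem proposition4p6 (R : realType) (X A : finType) (Rs : boi R X A -> Prop) :
  (0 < #|X|)%N -> (0 < #|A|)%N -> is_resource Rs ->
  operator_space_structure (res_norm Rs).
Proof.
move=> hX hA HR; split.
  split.
  - by move=> n u _; apply: res_fin.
  - by move=> n u _; apply: res_def.
  - by move=> n c u _; apply: res_scale.
  - by move=> n u v _; apply: res_add.
split.
  by move=> n m v w _ _; apply: res_block.
by move=> n m al v be _ _; apply: res_mul3.
Qed.
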